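(* Multistage Vertex Cover restricted to instances in which each layer is planar and $\ell\ge 2k$, parameterized by $k$, admits an AND-composition.
   Context: A temporal graph $\mathcal{G}$ is a sequence of layers (static graphs) $(G_1,\dots,G_\tau)$ on a common vertex set $V$. Multistage Vertex Cover: given $\mathcal{G}$ and integers $k\in\mathbb{N}$, $\ell\in\mathbb{N}_0$, decide whether there is $(S_1,\dots,S_\tau)$ with each $S_i\subseteq V$ a vertex cover of $G_i$ of size at most $k$ and $|S_i\triangle S_{i+1}|\le\ell$ for all $i<\tau$ ($\triangle$ = symmetric difference). An AND-composition for a parameterized problem $L$ is an algorithm that, given $p$ instances $(x_1,k),\dots,(x_p,k)$ of $L$ (all with the same parameter $k$), computes in time polynomial in $\sum_{i=1}^p|x_i|$ an instance $(y,k')$ of $L$ such that (i) $(y,k')\in L$ if and only if $(x_i,k)\in L$ for all $i\in\{1,\dots,p\}$, and (ii) $k'$ is polynomially upper-bounded in $k$. *)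

(* Defs.v *)
From Stdlib Require Import Reals.
From mathcomp Require Import all_boot.

Set Implicit Arguments.
Unset Strict Implicit.
Unset Printing Implicit Defensive.

Local Open Scope nat_scope.

(* The vertex set is V = {0, ..., nverts - 1}; the temporal graph is the     *)
(* sequence of layers G_1, ..., G_tau, each layer given by its edge list.    *)
Record mvc_instance := MVC {
  nverts : nat;
  layers : seq (seq (nat * nat));
  kpar : nat;
  lpar : nat }.

Definition mvc_wf (x : mvc_instance) : Prop :=
  forall L, L \in layers x -> forall e, e \in L ->
    [/\ e.1 < nverts x, e.2 < nverts x & e.1 != e.2].

Definition is_vertex_cover (n : nat) (L : seq (nat * nat)) (S : {set 'I_n}) : Prop :=
  forall e, e \in L -> exists2 w, w \in S & (val w == e.1) || (val w == e.2).

Definition symdiff (T : finType) (A B : {set T}) : {set T} := (A :\: B) :|: (B :\: A).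

Definition mvc_yes (x : mvc_instance) : Prop :=
  exists S : seq {set 'I_(nverts x)},
    [/\ size S = size (layers x),
        (forall i, i < size (layers x) ->
           is_vertex_cover (nth [::] (layers x) i) (nth set0 S i)
           /\ #|nth set0 S i| <= kpar x)
      & (forall i, i.+1 < size (layers x) ->
           #|symdiff (nth set0 S i) (nth set0 S i.+1)| <= lpar x)].

(* Planarity: a drawing in R^2 with distinct points for the vertices and     *)
(* Jordan arcs (continuous, injective on [0,1]) for the edges, arcs meeting  *)
(* only in common endpoints and not passing through other vertices.          *)
(* The arc of edge {u,v} is indexed by (minn u v, maxn u v).                  *)
Definition in01 (s : R) : Prop := Rle 0 s /\ Rle s 1.

Definition planar (n : nat) (E : seq (nat * nat)) : Prop :=
  exists (px py : nat -> R) (ax ay : nat -> nat -> R -> R),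
  (forall u v, u < n -> v < n -> px u = px v -> py u = py v -> u = v) /\
  (forall e, e \in E ->
     let a := minn e.1 e.2 in let b := maxn e.1 e.2 in
     [/\ continuity (ax a b) /\ continuity (ay a b),
         (ax a b R0 = px a /\ ay a b R0 = py a) /\
         (ax a b R1 = px b /\ ay a b R1 = py b),
         (forall s t, in01 s -> in01 t ->
            ax a b s = ax a b t -> ay a b s = ay a b t -> s = t),
         (forall w s, w < n -> w <> a -> w <> b -> in01 s ->
            ~ (ax a b s = px w /\ ay a b s = py w))
       & (forall e', e' \in E ->
            let a' := minn e'.1 e'.2 in let b' := maxn e'.1 e'.2 in
            (a, b) <> (a', b') ->
            forall s t, in01 s -> in01 t ->
              ax a b s = ax a' b' t -> ay a b s = ay a' b' t ->
              exists w, [/\ w = a \/ w = b, w = a' \/ w = b' &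
                            ax a b s = px w /\ ay a b s = py w])]).

Definition restricted_instance (x : mvc_instance) : Prop :=
  [/\ mvc_wf x, (forall L, L \in layers x -> planar (nverts x) L)
    & 2 * kpar x <= lpar x].

Definition AND_composition (f : seq mvc_instance -> mvc_instance) : Prop :=
  exists c : nat,
  forall (xs : seq mvc_instance) (k : nat),
    0 < size xs ->
    (forall x, List.In x xs -> restricted_instance x /\ kpar x = k) ->
    [/\ restricted_instance (f xs),
        (mvc_yes (f xs) <-> (forall x, List.In x xs -> mvc_yes x))
      & kpar (f xs) <= c * k ^ c + c].

(* Polynomial-time computability, axiomatized: PT A B f is meant to say that *)
(* f : A -> B is polynomial-time computable w.r.t. standard encodings.       *)
(* We only assume closure properties that the class of polynomial-time       *)
(* computable functions satisfies.                  *)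
Record poly_time_class (PT : forall A B : Type, (A -> B) -> Prop) : Prop := {
  pt_id : forall A, PT A A (fun x => x);
  pt_comp : forall A B C (f : A -> B) (g : B -> C),
      PT A B f -> PT B C g -> PT A C (fun x => g (f x));
  pt_pair : forall A B C (f : A -> B) (g : A -> C),
      PT A B f -> PT A C g -> PT A (B * C)%type (fun x => (f x, g x));
  pt_fst : forall A B, PT (A * B)%type A fst;
  pt_snd : forall A B, PT (A * B)%type B snd;
  pt_const : forall A B (b : B), PT A B (fun _ => b);
  pt_add : PT (nat * nat)%type nat (fun p => p.1 + p.2);
  pt_mul : PT (nat * nat)%type nat (fun p => p.1 * p.2);
  pt_max : PT (nat * nat)%type nat (fun p => maxn p.1 p.2);
  pt_sumn : PT (seq nat) nat sumn;
  pt_maxlist : PT (seq nat) nat (foldr maxn 0);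
  pt_map : forall A B (f : A -> B), PT A B f -> PT (seq A) (seq B) (map f);
  pt_flatten : forall A, PT (seq (seq A)) (seq A) (@flatten A);
  pt_cat : forall A, PT (seq A * seq A)%type (seq A) (fun p => p.1 ++ p.2);
  pt_head : forall A (a : A), PT (seq A) A (head a);
  pt_mk : PT (nat * seq (seq (nat * nat)) * nat * nat)%type mvc_instance
             (fun q => MVC q.1.1.1 q.1.1.2 q.1.2 q.2);
  pt_nverts : PT mvc_instance nat nverts;
  pt_layers : PT mvc_instance (seq (seq (nat * nat))) layers;
  pt_kpar : PT mvc_instance nat kpar;
  pt_lpar : PT mvc_instance nat lpar }.

(* Main.v *)
Require Import Defs.
From Stdlib Require Import Reals Lra.
From mathcomp Require Import all_boot.

Set Implicit Arguments.
Unset Strict Implicit.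
Unset Printing Implicit Defensive.

Local Open Scope nat_scope.

Definition has_vc (n : nat) (L : seq (nat * nat)) (k : nat) : Prop :=
  exists S : {set 'I_n}, is_vertex_cover L S /\ #|S| <= k.

Lemma card_symdiff (T : finType) (A B : {set T}) :
  #|symdiff A B| <= #|A| + #|B|.
Proof.
rewrite /symdiff; apply: leq_trans (leq_card_setU _ _) _.
by apply: leq_add; apply: subset_leq_card; apply: subsetDl.
Qed.

Lemma choose_seq (n : nat) (P : seq (nat * nat) -> {set 'I_n} -> Prop)
  (Ls : seq (seq (nat * nat))) :
  (forall L, L \in Ls -> exists S, P L S) ->
  exists Ss : seq {set 'I_n}, size Ss = size Ls /\
    forall i, i < size Ls -> P (nth [::] Ls i) (nth set0 Ss i).
Proof.
elim: Ls => [|L Ls IH] H; first by exists [::].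
have [S HS] := H L (mem_head _ _).
have [Ss [H1 H2]] : exists Ss : seq {set 'I_n}, size Ss = size Ls /\
    forall i, i < size Ls -> P (nth [::] Ls i) (nth set0 Ss i).
  by apply: IH => L' HL'; apply: H; rewrite inE HL' orbT.
exists (S :: Ss); split; first by rewrite /= H1.
by case=> [|i] //= Hi; apply: H2.
Qed.

Lemma yes_iff (x : mvc_instance) : 2 * kpar x <= lpar x ->
  (mvc_yes x <-> forall L, L \in layers x -> has_vc (nverts x) L (kpar x)).
Proof.
move=> Hl; split.
  move=> [S [Hs Hc _]] L HL.
  have Hi : index L (layers x) < size (layers x) by rewrite index_mem.
  have [H1 H2] := Hc _ Hi.
  by exists (nth set0 S (index L (layers x))); rewrite nth_index in H1.
move=> H.
have [Ss [H1 H2]] := @choose_seq (nverts x)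
  (fun L S => is_vertex_cover L S /\ #|S| <= kpar x) (layers x) H.
exists Ss; split => // i Hi.
apply: leq_trans (card_symdiff _ _) _; apply: leq_trans Hl.
have [_ a] := H2 i (ltnW Hi); have [_ b] := H2 i.+1 Hi.
by rewrite mul2n -addnn leq_add.
Qed.

Lemma transfer (n m : nat) (L : seq (nat * nat)) (k : nat) :
  (forall e, e \in L -> e.1 < n /\ e.2 < n) ->
  has_vc m L k -> has_vc n L k.
Proof.
move=> HL [S [HS Hk]].
exists [set i : 'I_n | val i \in map val (enum S)]; split.
  move=> e He; have [w Hw Hwe] := HS e He.
  have [h1 h2] := HL e He.
  have Hwn : val w < n.
    by case/orP: Hwe => /eqP ->.
  exists (Ordinal Hwn) => //.
  by rewrite inE /=; apply: map_f; rewrite mem_enum.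
apply: leq_trans Hk; rewrite cardE.
have -> : size (enum [set i : 'I_n | val i \in map val (enum S)]) =
  size (map val (enum [set i : 'I_n | val i \in map val (enum S)])) by rewrite size_map.
rewrite cardE -(size_map val (enum S)).
apply: uniq_leq_size.
  by rewrite map_inj_uniq ?enum_uniq //; apply: val_inj.
by move=> z /mapP [i]; rewrite mem_enum inE => Hi ->.
Qed.

Lemma atan_inj (a b : R) : atan a = atan b -> a = b.
Proof.
move=> H; destruct (Rtotal_order a b) as [h|[h|h]] => //.
- have := atan_increasing _ _ h; lra.
- have := atan_increasing _ _ h; lra.
Qed.

Lemma atan_lt2 (a : R) (w : nat) : Rlt (atan a) (Rplus (INR w) (IZR 2)).
Proof.
have [_ h] := atan_bound a; have := PI_4; have := pos_INR w; lra.
Qed.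

Lemma planar_grow (n m : nat) (L : seq (nat * nat)) :
  n <= m -> (forall e, e \in L -> e.1 < n /\ e.2 < n) ->
  planar n L -> planar m L.
Proof.
move=> Hnm HL [px [py [ax [ay [Hv He]]]]].
exists (fun u => if u < n then atan (px u) else Rplus (INR u) (IZR 2)).
exists (fun u => if u < n then atan (py u) else IZR 0).
exists (fun a b s => atan (ax a b s)), (fun a b s => atan (ay a b s)).
split.
  move=> u v Hu Hv'.
  case: ifP => hu; case: ifP => hv.
  - move=> /atan_inj h1 /atan_inj h2; exact: Hv.
  - move=> h; have := atan_lt2 (px u) v; lra.
  - move=> h; have := atan_lt2 (px v) u; lra.
  - move=> h _; apply: INR_eq; lra.
move=> e Hein.
have [h1 h2] := HL e Hein.
have Ha : minn e.1 e.2 < n by rewrite gtn_min h1.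
have Hb : maxn e.1 e.2 < n by rewrite gtn_max h1 h2.
have [[c1 c2] [[e1 e2] [e3 e4]] Hinj Hnot Hcr] := He e Hein.
split.
- have ca : continuity atan.
    by move=> z; apply: derivable_continuous_pt; apply: derivable_pt_atan.
  by split; [apply: (continuity_comp _ _ c1 ca) | apply: (continuity_comp _ _ c2 ca)].
- by rewrite /= Ha Hb e1 e2 e3 e4.
- move=> s t hs ht /atan_inj h3 /atan_inj h4; exact: Hinj.
- move=> w s Hw Hwa Hwb hs /=.
  case: ifP => hw.
    move=> [/atan_inj k1 /atan_inj k2]; exact: (Hnot w s hw Hwa Hwb hs).
  move=> [k1 _]; rewrite /= ?hw in k1; have := atan_lt2 (ax (minn e.1 e.2) (maxn e.1 e.2) s) w; move=> h; rewrite k1 in h; exact: (Rlt_irrefl _ h).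
- move=> e' He' a' b' Hne s t hs ht /atan_inj k1 /atan_inj k2.
  have [w [Hw1 Hw2 [k3 k4]]] := Hcr e' He' Hne s t hs ht k1 k2.
  exists w; split => //.
  have Hwn : w < n by case: Hw1 => ->.
  by rewrite /= Hwn k3 k4.
Qed.

Definition d0 : mvc_instance := MVC 0 [::] 0 0.

Definition comp (xs : seq mvc_instance) : mvc_instance :=
  MVC (foldr maxn 0 (map nverts xs)) (flatten (map layers xs))
      (kpar (head d0 xs)) (2 * kpar (head d0 xs)).

Lemma mem_flat (xs : seq mvc_instance) L :
  L \in flatten (map layers xs) <-> exists x, List.In x xs /\ L \in layers x.
Proof.
elim: xs => [|x xs IH] /=; first by split => // [[x []]].
rewrite mem_cat; split.
  case/orP => [h|/IH [y [h1 h2]]]; first by exists x; split => //; left.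
  by exists y; split => //; right.
move=> [y [[<-|h1] h2]]; first by rewrite h2.
by apply/orP; right; apply/IH; exists y.
Qed.

Lemma le_max (xs : seq mvc_instance) x :
  List.In x xs -> nverts x <= foldr maxn 0 (map nverts xs).
Proof.
elim: xs => [|y xs IH] //= [<-|h]; first by apply: leq_maxl.
by apply: leq_trans (IH h) (leq_maxr _ _).
Qed.

Lemma comp_PT (PT : forall A B : Type, (A -> B) -> Prop) :
  poly_time_class PT -> PT (seq mvc_instance) mvc_instance comp.
Proof.
move=> P.
have hn : PT (seq mvc_instance) nat (fun xs => foldr maxn 0 (map nverts xs)).
  exact: (pt_comp P (pt_map P (pt_nverts P)) (pt_maxlist P)).
have hl : PT (seq mvc_instance) (seq (seq (nat * nat))) (fun xs => flatten (map layers xs)).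
  exact: (pt_comp P (pt_map P (pt_layers P)) (pt_flatten P _)).
have hk : PT (seq mvc_instance) nat (fun xs => kpar (head d0 xs)).
  exact: (pt_comp P (pt_head P d0) (pt_kpar P)).
have h2 : PT (seq mvc_instance) nat (fun xs => 2 * kpar (head d0 xs)).
  exact: (pt_comp P (pt_pair P (pt_const P _ 2) hk) (pt_mul P)).
exact: (pt_comp P (pt_pair P (pt_pair P (pt_pair P hn hl) hk) h2) (pt_mk P)).
Qed.

Theorem proposition37 :
  forall PT : forall A B : Type, (A -> B) -> Prop,
    poly_time_class PT ->
    exists f : seq mvc_instance -> mvc_instance,
      PT (seq mvc_instance) mvc_instance f /\ AND_composition f.
Proof.
move=> PT P; exists comp; split; first exact: comp_PT.
exists 1 => xs k Hsz Hxs.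
have Hk : kpar (comp xs) = k.
  case: xs Hsz Hxs => [|x xs] //= _ H; by case: (H x (or_introl erefl)).
have Hedge : forall L, L \in layers (comp xs) -> exists x, List.In x xs /\
    L \in layers x /\ (forall e, e \in L -> e.1 < nverts x /\ e.2 < nverts x).
  move=> L /mem_flat [x [h1 h2]]; exists x; do 2!split => //.
  have [[Hwf _ _] _] := Hxs x h1.
  by move=> e He; have [] := Hwf L h2 e He.
have Hr : restricted_instance (comp xs).
  split.
  - move=> L HL e He; have [x [h1 [h2 h3]]] := Hedge L HL.
    have [a b] := h3 e He; have hm := le_max h1.
    split; [exact: leq_trans a hm | exact: leq_trans b hm |].
    have [[Hwf _ _] _] := Hxs x h1; by have [] := Hwf L h2 e He.
  - move=> L HL; have [x [h1 [h2 h3]]] := Hedge L HL.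
    have [[_ Hpl _] _] := Hxs x h1.
    exact: (planar_grow (le_max h1) h3 (Hpl L h2)).
  - by [].
split => //; last by rewrite Hk expn1 mul1n leq_addr.
case: Hr => _ _ Hl.
rewrite (yes_iff Hl) Hk; split.
  move=> H x hx.
  have [[_ _ Hlx] Hkx] := Hxs x hx.
  apply/(yes_iff Hlx) => L HL; rewrite Hkx.
  have HL' : L \in layers (comp xs) by apply/mem_flat; exists x.
  apply: transfer (H L HL').
  have [[Hwf _ _] _] := Hxs x hx.
  by move=> e He; have [] := Hwf L HL e He.
move=> H L HL; have [x [h1 [h2 h3]]] := Hedge L HL.
have [[_ _ Hlx] Hkx] := Hxs x h1.
have := (yes_iff Hlx).1 (H x h1) L h2; rewrite Hkx => hv.
apply: transfer hv => e He; have [a b] := h3 e He; have hm := le_max h1.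
split; [exact: leq_trans a hm | exact: leq_trans b hm].
Qed.
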